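(* Let $\Sigma=\{\sigma_0,\sigma_1,\sigma_2\}$ and consider two users with confusion graphs $G_1=(\Sigma,\{\sigma_0\sigma_1\})$ and $G_2=(\Sigma,\{\sigma_0\sigma_2\})$. Then the following rate vectors are optimal: (i) $(R_1,H(R_1))$ for $R_1\in[1/2,2/3]$; (ii) $(R_1,\log_2 3-R_1)$ for $R_1\in[2/3,\log_2 3-2/3]$; (iii) $(H(R_2),R_2)$ for $R_2\in[1/2,2/3]$.
   Context: $H(x)=-x\log_2 x-(1-x)\log_2(1-x)$ is the binary entropy function. Setting: a sender broadcasts a word of length $n$ over a finite alphabet $\Sigma$ to users; user $i$ has a confusion graph $G_i$ on $\Sigma$, where $ab$ is an edge iff user $i$ cannot distinguish $a$ and $b$. Words $x,y\in\Sigma^n$ are distinguishable by user $i$ if some coordinate $t$ has $x_t\neq y_t$ and $x_ty_t$ not an edge of $G_i$. A vector $(m_1,m_2)$ is feasible for length $n$ if there is $E:[m_1]\times[m_2]\to\Sigma^n$ such that for each $i$ and tuples $a,a'$ with $a_i\neq a'_i$, $E(a),E(a')$ are distinguishable by user $i$. A rate vector $(R_1,R_2)$ is feasible if there are feasible vectors for lengths $n\to\infty$ with $R_i=\lim\frac{\log_2 m_i^{(n)}}{n}$. A rate vector is optimal if it is feasible and no user can increase his rate while the other user keeps the same rate. *)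

(* Defs.v *)
From Stdlib Require Import Reals.
From mathcomp Require Import all_boot.

Set Implicit Arguments.
Unset Strict Implicit.

Definition Sigma := 'I_3.
Definition s0 : Sigma := @Ordinal 3 0 isT.
Definition s1 : Sigma := @Ordinal 3 1 isT.
Definition s2 : Sigma := @Ordinal 3 2 isT.

Definition graph := Sigma -> Sigma -> Prop.

Definition G1 : graph := fun a b => (a = s0 /\ b = s1) \/ (a = s1 /\ b = s0).
Definition G2 : graph := fun a b => (a = s0 /\ b = s2) \/ (a = s2 /\ b = s0).

Definition word (n : nat) := 'I_n -> Sigma.

Definition distinguishable (G : graph) (n : nat) (x y : word n) : Prop :=
  exists t : 'I_n, x t <> y t /\ ~ G (x t) (y t).

(* (m1, m2) feasible for length n (two users with graphs Ga, Gb);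
   [m] = 'I_m, and we require m_i >= 1 so that log2 m_i is meaningful. *)
Definition feasible_vec (Ga Gb : graph) (n m1 m2 : nat) : Prop :=
  (0 < m1)%N /\ (0 < m2)%N /\
  exists E : 'I_m1 -> 'I_m2 -> word n,
    (forall (a1 a1' : 'I_m1) (a2 a2' : 'I_m2), a1 <> a1' ->
        distinguishable Ga (E a1 a2) (E a1' a2')) /\
    (forall (a1 a1' : 'I_m1) (a2 a2' : 'I_m2), a2 <> a2' ->
        distinguishable Gb (E a1 a2) (E a1' a2')).

Local Open Scope R_scope.
Definition log2 (x : R) : R := ln x / ln 2.

Definition Hb (x : R) : R := - x * log2 x - (1 - x) * log2 (1 - x).

Definition feasible_rate (Ga Gb : graph) (R1 R2 : R) : Prop :=
  exists (len m1 m2 : nat -> nat),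
    (forall k, feasible_vec Ga Gb (len k) (m1 k) (m2 k)) /\
    (forall k, (len k < len k.+1)%N) /\
    Un_cv (fun k => (log2 (INR (m1 k)) / INR (len k))) R1 /\
    Un_cv (fun k => (log2 (INR (m2 k)) / INR (len k))) R2.

Definition optimal_rate (Ga Gb : graph) (R1 R2 : R) : Prop :=
  feasible_rate Ga Gb R1 R2 /\
  (forall r, R1 < r -> ~ feasible_rate Ga Gb r R2) /\
  (forall r, R2 < r -> ~ feasible_rate Ga Gb R1 r).

(* Main.v *)
Require Import Defs.
From Stdlib Require Import Reals.
From mathcomp Require Import all_boot.
Open Scope R_scope.

From Stdlib Require Import Lra Lia ZArith.
From mathcomp Require Import all_boot zify.

Set Implicit Arguments.
Unset Strict Implicit.
Unset Printing Implicit Defensive.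

Close Scope R_scope.


Lemma Sigma_cases (a : Sigma) : a = s0 \/ a = s1 \/ a = s2.
Proof.
case: a => [[|[|[|m]]] H].
- by left; apply: val_inj.
- by right; left; apply: val_inj.
- by right; right; apply: val_inj.
- by [].
Qed.

Lemma s01 : s0 <> s1. Proof. by move/(congr1 val). Qed.
Lemma s02 : s0 <> s2. Proof. by move/(congr1 val). Qed.
Lemma s12 : s1 <> s2. Proof. by move/(congr1 val). Qed.

Definition Aset n (x : word n) : {set 'I_n} := [set t | x t == s2].
Definition Bset n (x : word n) : {set 'I_n} := [set t | x t == s1].

Lemma dist1 n (x y : word n) : distinguishable G1 x y <-> Aset x <> Aset y.
Proof.
split.
- case=> t [Hne HG] E.
  move/setP: E => /(_ t); rewrite !inE.
  have h01 := s01; have h02 := s02; have h12 := s12.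
  case: (Sigma_cases (x t)) => [Hx|[Hx|Hx]]; case: (Sigma_cases (y t)) => [Hy|[Hy|Hy]];
    rewrite Hx Hy in Hne HG *; rewrite ?eqxx //;
    try (move/eqP; congruence);
    try (by move=> _; apply: HG; rewrite /G1; tauto);
    try (by move=> _; apply Hne).
  all: try (move=> H; symmetry in H; move/eqP: H; congruence).
- move=> NE.
  have : exists t, (t \in Aset x) != (t \in Aset y).
    apply/existsP; apply: contraT; rewrite negb_exists => /forallP H.
    by case: NE; apply/setP => t; move: (H t); rewrite negbK => /eqP.
  case=> t; rewrite !inE => H; exists t.
  have h01 := s01; have h02 := s02; have h12 := s12.
  case: (Sigma_cases (x t)) => [Hx|[Hx|Hx]]; case: (Sigma_cases (y t)) => [Hy|[Hy|Hy]];
    rewrite Hx Hy in H *; rewrite ?eqxx in H => //; rewrite /G1; split;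
    try congruence; intuition congruence.
Qed.
Lemma union_bound (T I : finType) (S : I -> {set T}) :
  \sum_(i : I) #|S i| < #|T| -> exists x, forall i, x \notin S i.
Proof.
move=> H.
have [x Hx|] := pickP [pred x | [forall i, x \notin S i]].
  by exists x => i; move/forallP: Hx; apply.
move=> Hall; exfalso; move: H; apply/negP; rewrite -leqNgt.
rewrite -sum1_card.
have -> : \sum_(i : I) #|S i| = \sum_(i : I) \sum_(x : T) (x \in S i : nat).
  apply: eq_bigr => i _; rewrite -sum1_card big_mkcond /=.
  by apply: eq_bigr => x _; case: (x \in S i).
rewrite exchange_big /=; apply: leq_sum => x _.
move: (Hall x) => /= /negbT; rewrite negb_forall => /existsP [i]; rewrite negbK => Hi.
by rewrite (bigD1 i) //= Hi.
Qed.

Lemma card_family_prod (U : finType) (c : nat) (F : U -> pred 'I_c) :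
  #|(family F : simpl_pred {ffun U -> 'I_c})| = \prod_(u : U) #|F u|.
Proof.
by rewrite card_family foldrE big_map big_enum.
Qed.

Lemma exp_le_base m n e : m <= n -> m ^ e <= n ^ e.
Proof. by move=> H; elim: e => // e IH; rewrite !expnS leq_mul. Qed.

Lemma coloring (U L : finType) (nb : L -> {set U}) (c d : nat) :
  0 < c -> (forall l, d <= #|nb l|) -> #|L| * c * (c.-1) ^ d < c ^ d ->
  exists f : {ffun U -> 'I_c}, forall l (j : 'I_c), exists2 u, u \in nb l & f u = j.
Proof.
move=> c0 Hd Hc.
pose bad (p : L * 'I_c) : {set {ffun U -> 'I_c}} :=
  [set f : {ffun U -> 'I_c} | [forall u, (u \in nb p.1) ==> (f u != p.2)]].
suff [f Hf] : exists f, forall p, f \notin bad p.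
  exists f => l j; move: (Hf (l, j)); rewrite inE negb_forall => /existsP [u].
  by rewrite negb_imply negbK => /andP [H1 /eqP H2]; exists u.
apply: union_bound.
have Hb p : #|bad p| <= c.-1 ^ d * c ^ (#|U| - d).
  have dU : d <= #|U| := leq_trans (Hd p.1) (max_card _).
  pose F (u : U) : pred 'I_c := if u \in nb p.1 then predC1 p.2 else predT.
  have -> : #|bad p| = #|(family F : simpl_pred {ffun U -> 'I_c})|.
    apply: eq_card => f; rewrite inE; apply/forallP/familyP => H u; move: (H u);
      rewrite /F; case: (u \in nb p.1) => //=.
  rewrite card_family_prod (bigID (fun u => u \in nb p.1)) /=.
  rewrite (eq_bigr (fun _ => c.-1)); last first.
    move=> u Hu; rewrite /F Hu /=.
    by rewrite cardC1 card_ord.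
  rewrite prod_nat_const.
  rewrite (eq_bigr (fun _ => c)); last first.
    by move=> u Hu; rewrite /F (negbTE Hu) /= card_ord.
  rewrite prod_nat_const.
  have Hk := Hd p.1; set k := #|nb p.1| in Hk *.
  have -> : #|(fun i : U => i \notin nb p.1)| = #|U| - k.
    rewrite -(cardC (nb p.1)) addKn; apply: eq_card => u //.
  have kU : k <= #|U| by apply: max_card.
  rewrite -(subnKC Hk) expnD -mulnA leq_mul2l; apply/orP; right.
  have -> : #|U| - d = (k - d) + (#|U| - (d + (k - d))).
    rewrite (subnKC Hk); apply/eqP; rewrite -(eqn_add2l d) addnA (subnKC Hk) (subnKC kU) (subnKC dU) //.
  by rewrite expnD leq_mul2r exp_le_base ?leq_pred ?orbT.
apply: (@leq_ltn_trans (\sum_(p : L * 'I_c) (c.-1 ^ d * c ^ (#|U| - d)))).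
  by apply: leq_sum => p _; apply: Hb.
rewrite sum_nat_const card_prod card_ord card_ffun card_ord.
have [L0|Lpos] := posnP #|L|; first by rewrite L0 expn_gt0 c0.
have /card_gt0P [l _] := Lpos.
have dU : d <= #|U| := leq_trans (Hd l) (max_card _).
rewrite -{2}(subnKC dU) expnD.
by rewrite mulnA ltn_pmul2r // expn_gt0 c0.
Qed.

Lemma dist2 n (x y : word n) : distinguishable G2 x y <-> Bset x <> Bset y.
Proof.
split.
- case=> t [Hne HG] E.
  move/setP: E => /(_ t); rewrite !inE.
  have h01 := s01; have h02 := s02; have h12 := s12.
  case: (Sigma_cases (x t)) => [Hx|[Hx|Hx]]; case: (Sigma_cases (y t)) => [Hy|[Hy|Hy]];
    rewrite Hx Hy in Hne HG *; rewrite ?eqxx //;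
    try (move/eqP; congruence);
    try (by move=> _; apply: HG; rewrite /G2; tauto);
    try (by move=> _; apply Hne).
  all: try (move=> H; symmetry in H; move/eqP: H; congruence).
- move=> NE.
  have : exists t, (t \in Bset x) != (t \in Bset y).
    apply/existsP; apply: contraT; rewrite negb_exists => /forallP H.
    by case: NE; apply/setP => t; move: (H t); rewrite negbK => /eqP.
  case=> t; rewrite !inE => H; exists t.
  have h01 := s01; have h02 := s02; have h12 := s12.
  case: (Sigma_cases (x t)) => [Hx|[Hx|Hx]]; case: (Sigma_cases (y t)) => [Hy|[Hy|Hy]];
    rewrite Hx Hy in H *; rewrite ?eqxx in H => //; rewrite /G2; split;
    try congruence; intuition congruence.
Qed.

Definition mkword n (A B : {set 'I_n}) : word n :=
  fun t => if t \in B then s1 else if t \in A then s2 else s0.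

Lemma mkword_A n (A B : {set 'I_n}) : A \subset ~: B -> Aset (mkword A B) = A.
Proof.
move=> H; apply/setP => t; rewrite !inE /mkword.
case: ifP => tB.
  have : t \notin A by apply/negP => tA; move/subsetP: H => /(_ t tA); rewrite inE tB.
  by move/negbTE => ->; apply/eqP; apply: s12.
case: ifP => tA; first by rewrite eqxx.
by apply/eqP; apply: s02.
Qed.

Lemma mkword_B n (A B : {set 'I_n}) : Bset (mkword A B) = B.
Proof.
apply/setP => t; rewrite !inE /mkword.
case: ifP => tB; first by rewrite eqxx.
case: ifP => tA; first by apply/eqP => H; apply: s12; rewrite H.
by apply/eqP; apply: s01.
Qed.

Lemma build n m1 m2 (Bof : 'I_m2 -> {set 'I_n}) (f : {set 'I_n} -> 'I_m1) :
  (0 < m1)%N -> (0 < m2)%N -> injective Bof ->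
  (forall (a2 : 'I_m2) (a1 : 'I_m1), exists2 A : {set 'I_n}, A \subset ~: Bof a2 & f A = a1) ->
  feasible_vec G1 G2 n m1 m2.
Proof.
move=> m10 m20 Binj Hc; split => //; split => //.
pose Aof (a1 : 'I_m1) (a2 : 'I_m2) :=
  odflt set0 [pick A : {set 'I_n} | (A \subset ~: Bof a2) && (f A == a1)].
have HA a1 a2 : (Aof a1 a2 \subset ~: Bof a2) /\ f (Aof a1 a2) = a1.
  rewrite /Aof; case: pickP => [A /andP [H1 /eqP H2] | H] //=.
  by case: (Hc a2 a1) => A H1 H2; move: (H A); rewrite H1 H2 eqxx.
exists (fun a1 a2 => mkword (Aof a1 a2) (Bof a2)); split.
- move=> a1 a1' a2 a2' Hne; apply/dist1.
  case: (HA a1 a2) => H1 H2; case: (HA a1' a2') => H1' H2'.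
  rewrite !mkword_A // => E; apply: Hne; by rewrite -H2 -H2' E.
- move=> a1 a1' a2 a2' Hne; apply/dist2.
  by rewrite !mkword_B => E; apply: Hne; apply: Binj.
Qed.

Lemma bern x m : x ^ m.+1 + m.+1 * x ^ m <= (x + 1) ^ m.+1.
Proof.
elim: m => [|m IH]; first by rewrite expn1 expn0 mul1n.
rewrite !(expnS _ m.+1) !expnS in IH *.
set X := x ^ m in IH *; set Y := (x + 1) ^ m in IH *.
nia.
Qed.

Lemma bern2 c : 0 < c -> 2 * c.-1 ^ c <= c ^ c.
Proof.
case: c => [|c] // _ /=.
have := bern c c.
have -> : c + 1 = c.+1 by rewrite addn1.
move=> H; apply: leq_trans H.
by rewrite mul2n -addnn leq_add2l expnS leq_mul2r leqnSn orbT.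
Qed.

Lemma construct_triv n b : b <= n -> feasible_vec G1 G2 n 1 'C(n, b).
Proof.
move=> bn.
pose Bfam := [set B : {set 'I_n} | #|B| == b].
have cB : #|Bfam| = 'C(n, b) by rewrite card_draws card_ord.
have pos : 0 < #|Bfam| by rewrite cB bin_gt0.
rewrite -cB; apply: (@build n 1 #|Bfam| (@enum_val _ (mem Bfam)) (fun _ => ord0) isT pos (@enum_val_inj _ _)).
move=> a2 a1; exists set0; first exact: sub0set.
by rewrite [a1]ord1.
Qed.

Lemma construct n b e t : b <= n -> n - b = e + t -> 2 * n < 2 ^ t ->
  feasible_vec G1 G2 n (2 ^ e) 'C(n, b).
Proof.
move=> bn Hs Ht.
pose Bfam := [set B : {set 'I_n} | #|B| == b].
have cB : #|Bfam| = 'C(n, b) by rewrite card_draws card_ord.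
have pos : 0 < #|Bfam| by rewrite cB bin_gt0.
pose Bof := @enum_val _ (mem Bfam).
pose c := 2 ^ e.
have c0 : 0 < c by rewrite expn_gt0.
pose d := 2 ^ (n - b).
have Hnb l : d <= #|powerset (~: Bof l)|.
  rewrite card_powerset.
  have : Bof l \in Bfam by apply: enum_valP.
  rewrite inE => /eqP Hl.
  have H := cardsC (Bof l); rewrite Hl card_ord in H.
  have -> : #|~: Bof l| = n - b by lia.
  by [].
have Hc : #|'I_#|Bfam| | * c * (c.-1) ^ d < c ^ d.
  rewrite card_ord.
  have HL : #|Bfam| <= 2 ^ n.
    have sub : Bfam \subset powerset [set: 'I_n].
      by apply/subsetP => B _; rewrite powersetE subsetT.
    by have := subset_leq_card sub; rewrite card_powerset cardsT card_ord.
  have hc : c <= 2 ^ n by rewrite /c leq_exp2l //; lia.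
  have Hd : d = c * 2 ^ t by rewrite /d Hs expnD.
  have [e0|epos] := posnP e.
    by rewrite /c e0 expn0 /= exp0n ?muln0 // /d expn_gt0.
  have lt1 : #|Bfam| * c < 2 ^ (2 ^ t).
    apply: (@leq_ltn_trans (2 ^ n * 2 ^ n)); first exact: leq_mul.
    by rewrite -expnD ltn_exp2l // addnn -mul2n.
  apply: (@leq_trans (2 ^ (2 ^ t) * c.-1 ^ d)).
    rewrite ltn_pmul2r // expn_gt0; apply/orP; left.
    rewrite /c -subn1 subn_gt0.
    by rewrite -{1}(expn0 2) ltn_exp2l.
  rewrite Hd !expnM -expnMn.
  apply: exp_le_base; apply: bern2; exact: c0.
have [f Hf] := @coloring {set 'I_n} _ (fun l => powerset (~: Bof l)) c d c0 Hnb Hc.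
rewrite -cB; apply: (@build n c #|Bfam| Bof f c0 pos (@enum_val_inj _ _)).
move=> a2 a1.
case: (Hf a2 a1) => A; rewrite powersetE => HA HfA; by exists A.
Qed.

Lemma card_fibers (T K : finType) (g : T -> K) (S : {set T}) :
  #|S| = \sum_(k : K) #|[set x in S | g x == k]|.
Proof.
rewrite -sum1_card.
have -> : \sum_(k : K) #|[set x in S | g x == k]| =
          \sum_(k : K) \sum_(x in S) (g x == k : nat).
  apply: eq_bigr => k _; rewrite -sum1_card big_mkcond /= [RHS]big_mkcond /=.
  by apply: eq_bigr => x _; rewrite inE; case: (x \in S); case: (g x == k).
rewrite exchange_big /=; apply: eq_bigr => x _.
by rewrite (bigD1 (g x)) //= eqxx big1 ?addn0 // => k /negbTE; rewrite eq_sym => ->.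
Qed.

Lemma inj_card (T K : finType) (f : T -> K) (S : {set T}) (D : {set K}) :
  {in S &, injective f} -> (forall x, x \in S -> f x \in D) -> #|S| <= #|D|.
Proof.
move=> inj HD; rewrite -(card_in_imset inj); apply: subset_leq_card.
by apply/subsetP => y /imsetP [x xS ->]; apply: HD.
Qed.

Lemma card_le_n n (A : {set 'I_n}) : #|A| <= n.
Proof. by have := max_card (mem A); rewrite card_ord. Qed.

Lemma conv_comb n m1 m2 : feasible_vec G1 G2 n m1 m2 ->
  exists w, w <= n /\ m1 * m2 <= n.+1 * ('C(n, w) * 2 ^ (n - w)) /\ m2 <= n.+1 * 'C(n, w).
Proof.
case=> m10 [m20 [E [H1 H2]]].
pose cells := [set: 'I_m1 * 'I_m2].
pose Bw (p : 'I_m1 * 'I_m2) : 'I_n.+1 := inord #|Bset (E p.1 p.2)|.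
have BwE p : (Bw p : nat) = #|Bset (E p.1 p.2)|.
  by rewrite /Bw inordK // ltnS; apply: card_le_n.
pose S (w : 'I_n.+1) := [set p in cells | Bw p == w].
have Hsum : m1 * m2 = \sum_(w : 'I_n.+1) #|S w|.
  by rewrite -(card_fibers Bw cells) cardsT card_prod !card_ord.
pose w0 := [arg max_(w > ord0) #|S w|].
have Hw0 : m1 * m2 <= n.+1 * #|S w0|.
  rewrite Hsum /w0; case: arg_maxnP => // w _ Hmax.
  apply: (@leq_trans (\sum_(i < n.+1) #|S w|)); first by apply: leq_sum => i _; exact: Hmax.
  by rewrite sum_nat_const card_ord.
have Hfib : forall K, (forall B : {set 'I_n}, #|B| = w0 ->
    #|[set p in S w0 | Bset (E p.1 p.2) == B]| <= K) -> #|S w0| <= 'C(n, w0) * K.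
  move=> K HK.
  rewrite (card_fibers (fun p : 'I_m1 * 'I_m2 => Bset (E p.1 p.2)) (S w0)).
  rewrite (bigID (fun B : {set 'I_n} => #|B| == w0)) /=.
  rewrite [X in _ + X]big1 ?addn0; last first.
    move=> B /eqP HB; apply/eqP; rewrite cards_eq0; apply/eqP/setP => p.
    rewrite !inE; apply/negP => /andP [/andP [_ /eqP Hp] /eqP HpB]; apply: HB.
    by rewrite -HpB -BwE Hp.
  have cd := card_draws 'I_n w0; rewrite card_ord in cd.
  rewrite -cd -sum_nat_const.
  have -> : \sum_(i in [set A : {set 'I_n} | #|A| == w0]) K = \sum_(i : {set 'I_n} | #|i| == w0) K.
    by apply: eq_bigl => B; rewrite inE.
  by apply: leq_sum => B /eqP HB; apply: HK.
exists w0; split; first by rewrite -ltnS.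
split.
- apply: (leq_trans Hw0); rewrite leq_mul2l; apply/orP; right.
  apply: Hfib => B HB.
  apply: (@leq_trans #|powerset (~: B)|); last first.
    rewrite card_powerset; have H := cardsC B; rewrite HB card_ord in H.
    by have -> : #|~: B| = n - w0 by lia.
  apply: (@inj_card _ _ (fun p : 'I_m1 * 'I_m2 => Aset (E p.1 p.2))).
    move=> p q; rewrite !inE => /andP [_ /eqP pB] /andP [_ /eqP qB] HA.
    case: p q pB qB HA => [a1 a2] [b1 b2] /= pB qB HA.
    have e2 : a2 = b2.
      apply/eqP; apply: contraT => /eqP ne.
      by case: (proj1 (dist2 _ _) (H2 a1 b1 a2 b2 ne)); rewrite pB qB.
    rewrite e2 in HA *.
    have e1 : a1 = b1.
      apply/eqP; apply: contraT => /eqP ne.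
      by case: (proj1 (dist1 _ _) (H1 a1 b1 b2 b2 ne)).
    by rewrite e1.
  move=> p; rewrite !inE => /andP [_ /eqP pB].
  apply/subsetP => t; rewrite !inE => /eqP Ht.
  rewrite -pB !inE Ht; apply/eqP => H; apply: s12; by rewrite H.
- have Hf : #|S w0| <= 'C(n, w0) * m1.
    apply: Hfib => B HB.
    apply: (@leq_trans #|[set: 'I_m1]|); last by rewrite cardsT card_ord.
    apply: (@inj_card _ _ (fun p : 'I_m1 * 'I_m2 => p.1)); last by move=> p; rewrite inE.
    move=> p q; rewrite !inE => /andP [_ /eqP pB] /andP [_ /eqP qB] HA.
    case: p q pB qB HA => [a1 a2] [b1 b2] /= pB qB HA.
    have e2 : a2 = b2.
      apply/eqP; apply: contraT => /eqP ne.
      by case: (proj1 (dist2 _ _) (H2 a1 b1 a2 b2 ne)); rewrite pB qB.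
    by rewrite HA e2.
  have := leq_trans Hw0 (leq_mul (leqnn n.+1) Hf).
  move=> H; rewrite -(leq_pmul2l m10); move: H; rewrite [m1 * (_ * _)]mulnC mulnA [m1 * m2]mulnC //.
Qed.

Definition tau (a : Sigma) : Sigma := if a == s1 then s2 else if a == s2 then s1 else a.

Lemma tau_A n (x : word n) : Aset (fun t => tau (x t)) = Bset x.
Proof.
apply/setP => t; rewrite !inE /tau.
by case: (Sigma_cases (x t)) => [->|[->|->]].
Qed.

Lemma tau_B n (x : word n) : Bset (fun t => tau (x t)) = Aset x.
Proof.
apply/setP => t; rewrite !inE /tau.
by case: (Sigma_cases (x t)) => [->|[->|->]].
Qed.

Lemma feasible_sym n m1 m2 : feasible_vec G1 G2 n m1 m2 -> feasible_vec G1 G2 n m2 m1.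
Proof.
case=> m10 [m20 [E [H1 H2]]]; split => //; split => //.
exists (fun a2 a1 t => tau (E a1 a2 t)); split.
- move=> a2 a2' a1 a1' ne; apply/dist1; rewrite !tau_A; apply/dist2; exact: H2.
- move=> a2 a2' a1 a1' ne; apply/dist2; rewrite !tau_B; apply/dist1; exact: H1.
Qed.

Lemma divP m m' (i : 'I_(m * m')) : i %/ m' < m.
Proof.
case: m' i => [|m'] i; first by case: i => k; rewrite muln0.
by rewrite ltn_divLR // mulnC.
Qed.

Lemma modP m m' (i : 'I_(m * m')) : i %% m' < m'.
Proof.
case: m' i => [|m'] i; first by case: i => k; rewrite muln0.
by rewrite ltn_pmod.
Qed.

Definition odiv m m' (i : 'I_(m * m')) : 'I_m := Ordinal (divP i).
Definition omod m m' (i : 'I_(m * m')) : 'I_m' := Ordinal (modP i).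

Lemma odiv_omod_inj m m' (i j : 'I_(m * m')) : odiv i = odiv j -> omod i = omod j -> i = j.
Proof.
move=> /(congr1 val) /= H1 /(congr1 val) /= H2.
by apply: val_inj; rewrite /= (divn_eq i m') (divn_eq j m') H1 H2.
Qed.

Definition catw n n' (x : word n) (y : word n') : word (n + n') :=
  fun t => match split t with inl i => x i | inr j => y j end.

Lemma catw_dist (G : graph) n n' (x x' : word n) (y y' : word n') :
  distinguishable G x x' \/ distinguishable G y y' ->
  distinguishable G (catw x y) (catw x' y').
Proof.
case=> [[i Hi]|[j Hj]].
- by exists (lshift n' i); rewrite /catw (unsplitK (inl _ i)).
- by exists (rshift n j); rewrite /catw (unsplitK (inr _ j)).
Qed.

Lemma feasible_prod n n' m1 m2 m1' m2' :
  feasible_vec G1 G2 n m1 m2 -> feasible_vec G1 G2 n' m1' m2' ->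
  feasible_vec G1 G2 (n + n') (m1 * m1') (m2 * m2').
Proof.
case=> m10 [m20 [E [H1 H2]]]; case=> m10' [m20' [E' [H1' H2']]].
split; first by rewrite muln_gt0 m10.
split; first by rewrite muln_gt0 m20.
exists (fun a1 a2 => catw (E (odiv a1) (odiv a2)) (E' (omod a1) (omod a2))); split.
- move=> a1 a1' a2 a2' ne; apply: catw_dist.
  case: (eqVneq (odiv a1) (odiv a1')) => [e|ne1].
  + right; apply: H1' => e'; apply: ne; exact: odiv_omod_inj.
  + by left; apply: H1; apply/eqP.
- move=> a1 a1' a2 a2' ne; apply: catw_dist.
  case: (eqVneq (odiv a2) (odiv a2')) => [e|ne1].
  + right; apply: H2' => e'; apply: ne; exact: odiv_omod_inj.
  + by left; apply: H2; apply/eqP.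
Qed.

Open Scope R_scope.

Lemma INR_muln m n : INR (m * n)%N = INR m * INR n.
Proof. by rewrite -multE mult_INR. Qed.
Lemma INR_addn m n : INR (m + n)%N = INR m + INR n.
Proof. by rewrite -plusE plus_INR. Qed.
Lemma INR_expn m n : INR (m ^ n)%N = INR m ^ n.
Proof. by rewrite -pow_INR; congr INR; elim: n => // n IH; rewrite expnS /= IH multE. Qed.
Lemma INR_leq m n : (m <= n)%N -> INR m <= INR n.
Proof. by move/leP; apply: le_INR. Qed.

Definition T (p : R) (n k : nat) : R := INR 'C(n, k) * p ^ k * (1 - p) ^ (n - k)%N.

Lemma T_rec p n k : T p n.+1 k.+1 = p * T p n k + (1 - p) * T p n k.+1.
Proof.
rewrite /T binS INR_addn subSS.
case: (ltnP k n) => Hk.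
  have -> : (n - k)%N = (n - k.+1).+1 by rewrite subnSK.
  simpl; ring.
rewrite bin_small ?ltnS //.
have -> : (n - k)%N = 0%N by apply/eqP; rewrite subn_eq0.
simpl; ring.
Qed.

Lemma T_ge0 p n k : 0 <= p <= 1 -> 0 <= T p n k.
Proof.
move=> Hp; rewrite /T; apply: Rmult_le_pos; [apply: Rmult_le_pos|].
- exact: pos_INR.
- apply: pow_le; lra.
- apply: pow_le; lra.
Qed.

Lemma T_le1 p n k : 0 <= p <= 1 -> T p n k <= 1.
Proof.
move=> Hp; elim: n k => [|n IH] [|k].
- by rewrite /T /= ; lra.
- by rewrite /T bin0n /=; lra.
- rewrite /T bin0 subn0 /= Rmult_1_l Rmult_1_l.
  have : (1 - p) ^ n <= 1 by apply: (Rle_trans _ (1 ^ n)); [apply: pow_incr; lra | rewrite pow1; lra].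
  have : 0 <= (1 - p) ^ n by apply: pow_le; lra.
  nra.
- rewrite T_rec.
  have := IH k; have := IH k.+1; have := T_ge0 n k Hp; have := T_ge0 n k.+1 Hp.
  nra.
Qed.

Lemma sum_shift (f : nat -> R) n :
  sum_f_R0 (fun i => f i.+1) n = sum_f_R0 f n.+1 - f 0%N.
Proof. rewrite (decomp_sum f n.+1) /=; [ring | lia]. Qed.

Lemma sum_scal_l (f : nat -> R) x N :
  sum_f_R0 (fun i => x * f i) N = x * sum_f_R0 f N.
Proof.
rewrite scal_sum; apply: PartSum.sum_eq => i _; ring.
Qed.

Lemma T_sum p n : sum_f_R0 (T p n) n = 1.
Proof.
elim: n => [|n IH]; first by rewrite /T /=; ring.
rewrite (decomp_sum (T p n.+1) n.+1); last by lia.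
rewrite /Nat.pred.
rewrite (PartSum.sum_eq _ (fun i => p * T p n i + (1 - p) * T p n i.+1)); last first.
  by move=> i _; rewrite T_rec.
rewrite plus_sum !sum_scal_l sum_shift /= IH.
have -> : T p n n.+1 = 0 by rewrite /T bin_small //= ; ring.
rewrite /T bin0 subn0 bin0 subn0 /=; ring.
Qed.

Lemma T_ratio p n k : (k < n)%N ->
  T p n k.+1 * (INR k + 1) * (1 - p) = T p n k * (INR n - INR k) * p.
Proof.
move=> kn.
have H := mul_bin_left n k.
have : INR (k.+1 * 'C(n, k.+1))%N = INR ((n - k) * 'C(n, k))%N by rewrite H.
rewrite !INR_muln -minusE minus_INR; last by apply/leP; apply: ltnW.
rewrite S_INR => HH.
rewrite /T.
have -> : (n - k)%N = (n - k.+1).+1 by rewrite subnSK.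
simpl.
have -> : INR 'C(n, k.+1) * (p * p ^ k) * (1 - p) ^ (n - k.+1) * (INR k + 1) * (1 - p)
  = ((INR k + 1) * INR 'C(n, k.+1)) * (p ^ k * (1 - p) ^ (n - k.+1) * p * (1 - p)) by ring.
rewrite HH; ring.
Qed.

Lemma sum_le_const (f : nat -> R) M n : (forall k, (k <= n)%N -> f k <= M) ->
  sum_f_R0 f n <= (INR n + 1) * M.
Proof.
elim: n => [|n IH] H; first by rewrite /=; have := H 0%N isT; lra.
change (sum_f_R0 f n + f n.+1 <= (INR n.+1 + 1) * M); rewrite S_INR.
have := IH (fun k Hk => H k (leqW Hk)); have := H n.+1 (leqnn _).
lra.
Qed.

Lemma T_max n b k : (0 < b)%N -> (b < n)%N -> (k <= n)%N ->
  T (INR b / INR n) n k <= T (INR b / INR n) n b.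
Proof.
move=> b0 bn kn.
have n0 : 0 < INR n by apply: lt_0_INR; apply/ltP; apply: leq_ltn_trans bn.
have bR : 0 < INR b by apply: lt_0_INR; apply/ltP.
have bnR : INR b < INR n by apply: lt_INR; apply/ltP.
set p := INR b / INR n.
have p0 : 0 < p by apply: Rdiv_lt_0_compat.
have p1 : p < 1 by rewrite /p; apply: (Rmult_lt_reg_r (INR n)) => //; field_simplify; lra.
have np : INR n * p = INR b by rewrite /p; field; lra.
have Tg k' := T_ge0 n k' (conj (Rlt_le _ _ p0) (Rlt_le _ _ p1)).
have up k' : (k' < b)%N -> T p n k' <= T p n k'.+1.
  move=> kb.
  have kn' : (k' < n)%N by apply: ltn_trans bn.
  have E := T_ratio p kn'.
  have kR : INR k' + 1 <= INR b by rewrite -S_INR; apply: le_INR; apply/leP.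
  have knR : INR k' + 1 <= INR n by rewrite -S_INR; apply: le_INR; apply/leP.
  have Hq : (INR k' + 1) * (1 - p) <= (INR n - INR k') * p.
    have e : (INR n - INR k') * p - (INR k' + 1) * (1 - p) = INR n * p + p - (INR k' + 1) by ring.
    rewrite np in e; lra.
  have X0 : 0 < (INR n - INR k') * p by apply: Rmult_lt_0_compat; lra.
  apply: (Rmult_le_reg_r _ _ _ X0).
  have -> : T p n k' * ((INR n - INR k') * p) = T p n k'.+1 * ((INR k' + 1) * (1 - p)).
    transitivity (T p n k' * (INR n - INR k') * p); first by ring.
    rewrite -E; ring.
  by apply: Rmult_le_compat_l => //; apply: Tg.
have down k' : (b <= k')%N -> (k' < n)%N -> T p n k'.+1 <= T p n k'.
  move=> bk kn'.
  have E := T_ratio p kn'.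
  have kR : INR b <= INR k' by apply: le_INR; apply/leP.
  have knR : INR k' + 1 <= INR n by rewrite -S_INR; apply: le_INR; apply/leP.
  have Hq : (INR n - INR k') * p <= (INR k' + 1) * (1 - p).
    have e : (INR n - INR k') * p - (INR k' + 1) * (1 - p) = INR n * p + p - (INR k' + 1) by ring.
    rewrite np in e; lra.
  have X0 : 0 < (INR k' + 1) * (1 - p) by apply: Rmult_lt_0_compat; have := pos_INR k'; lra.
  apply: (Rmult_le_reg_r _ _ _ X0).
  have -> : T p n k'.+1 * ((INR k' + 1) * (1 - p)) = T p n k' * ((INR n - INR k') * p).
    transitivity (T p n k'.+1 * (INR k' + 1) * (1 - p)); first by ring.
    rewrite E; ring.
  by apply: Rmult_le_compat_l => //; apply: Tg.
have upc m : forall k', (k' + m)%N = b -> T p n k' <= T p n b.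
  elim: m => [|m IH] k' H; first by rewrite addn0 in H; rewrite H; lra.
  apply: (Rle_trans _ (T p n k'.+1)); first by apply: up; rewrite -H; lia.
  by apply: IH; rewrite -H; lia.
have dnc m : (b + m <= n)%N -> T p n (b + m) <= T p n b.
  elim: m => [|m IH] H; first by rewrite addn0; lra.
  apply: (Rle_trans _ (T p n (b + m))); last by apply: IH; lia.
  rewrite addnS; apply: down; lia.
case: (leqP k b) => kb.
- by apply: (upc (b - k)%N); lia.
- have -> : k = (b + (k - b))%N by lia.
  apply: dnc; lia.
Qed.

Lemma ln_le a b : 0 < a -> a <= b -> ln a <= ln b.
Proof.
move=> a0 [H|->]; last by lra.
by apply: Rlt_le; apply: ln_increasing.
Qed.

Lemma ln_le_sub1 y : 0 < y -> ln y <= y - 1.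
Proof.
move=> y0; have := exp_ineq1_le (ln y); rewrite exp_ln //; lra.
Qed.

Definition hn (p : R) : R := - p * ln p - (1 - p) * ln (1 - p).

Lemma C_pos n k : (k <= n)%N -> 0 < INR 'C(n, k).
Proof. by move=> H; apply: lt_0_INR; apply/ltP; rewrite bin_gt0. Qed.

Lemma T_ln p n k : 0 < p < 1 -> (k <= n)%N ->
  ln (T p n k) = ln (INR 'C(n, k)) + INR k * ln p + INR (n - k)%N * ln (1 - p).
Proof.
move=> Hp kn; rewrite /T.
have h1 := C_pos kn.
have h2 : 0 < p ^ k by apply: pow_lt; lra.
have h3 : 0 < (1 - p) ^ (n - k)%N by apply: pow_lt; lra.
rewrite ln_mult; last by lra.
  rewrite ln_mult // !ln_pow //; lra.
by apply: Rmult_lt_0_compat.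
Qed.

Lemma lnC_upper x n w : 0 < x < 1 -> (w <= n)%N ->
  ln (INR 'C(n, w)) + INR w * ln (1 - x) + INR (n - w)%N * ln x <= 0.
Proof.
move=> Hx wn.
have Hp : 0 < 1 - x < 1 by lra.
have := T_ln Hp wn.
have -> : 1 - (1 - x) = x by ring.
move=> <-; rewrite -ln_1; apply: ln_le.
- rewrite /T; apply: Rmult_lt_0_compat; [apply: Rmult_lt_0_compat|].
  + exact: C_pos.
  + apply: pow_lt; lra.
  + apply: pow_lt; lra.
- apply: T_le1; lra.
Qed.

Lemma lnC_bounds n b : (0 < b)%N -> (b < n)%N ->
  INR n * hn (INR b / INR n) - ln (INR n + 1) <= ln (INR 'C(n, b)) <= INR n * hn (INR b / INR n).
Proof.
move=> b0 bn.
have n0 : 0 < INR n by apply: lt_0_INR; apply/ltP; apply: leq_ltn_trans bn.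
have bR : 0 < INR b by apply: lt_0_INR; apply/ltP.
have bnR : INR b < INR n by apply: lt_INR; apply/ltP.
set p := INR b / INR n.
have p0 : 0 < p by apply: Rdiv_lt_0_compat.
have p1 : p < 1 by rewrite /p; apply: (Rmult_lt_reg_r (INR n)) => //; field_simplify; lra.
have np : INR n * p = INR b by rewrite /p; field; lra.
have bnl : (b <= n)%N by apply: ltnW.
have nb : INR (n - b)%N = INR n * (1 - p).
  by rewrite -minusE minus_INR; [rewrite -np; ring | apply/leP].
have Hhn : INR b * ln p + INR (n - b)%N * ln (1 - p) = - (INR n * hn p).
  by rewrite nb -np /hn; ring.
split.
- have Tl : / (INR n + 1) <= T p n b.
    have := @sum_le_const (T p n) (T p n b) n (fun k Hk => T_max b0 bn Hk).
    rewrite T_sum => H.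
    apply: (Rmult_le_reg_l (INR n + 1)); first lra.
    rewrite Rinv_r; lra.
  have := ln_le (Rinv_0_lt_compat _ (ltac:(lra) : 0 < INR n + 1)) Tl.
  rewrite ln_Rinv; last lra.
  rewrite T_ln //; lra.
- have := lnC_upper (ltac:(lra) : 0 < 1 - p < 1) bnl.
  have -> : 1 - (1 - p) = p by ring.
  lra.
Qed.

Lemma cv_const c : Un_cv (fun _ => c) c.
Proof. move=> e e0; exists 0%nat => n _; rewrite /R_dist Rminus_diag Rabs_R0; lra. Qed.

Lemma squeeze (a c : nat -> R) l N0 :
  (forall n, (N0 <= n)%N -> Rabs (a n - l) <= c n) -> Un_cv c 0 -> Un_cv a l.
Proof.
move=> H Hc e e0; case: (Hc e e0) => N HN; exists (maxn N N0); move=> n Hn.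
have Hn' : (maxn N N0 <= n)%N by apply/leP.
have h1 : (n >= N)%coq_nat by apply/leP; apply: leq_trans (leq_maxl _ _) Hn'.
have h2 : (N0 <= n)%N by apply: leq_trans (leq_maxr N _) Hn'.
have := HN n h1; rewrite /R_dist Rminus_0_r => Hcn.
have := H n h2; have := Rle_abs (c n); rewrite /R_dist; lra.
Qed.

Lemma ln_div_small e : 0 < e -> exists N, forall n, (N <= n)%N ->
  0 <= ln (INR n + 1) / INR n < e.
Proof.
move=> e0.
set k := 4 / e.
have k0 : 0 < k by rewrite /k; apply: Rdiv_lt_0_compat; lra.
have [N HN] := INR_archimed (e / 2) (Rabs (ln k) + 1) (ltac:(lra)).
exists N.+1; move=> n Hn.
have nN : INR N.+1 <= INR n by apply: INR_leq.
rewrite S_INR in nN.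
have N0 := pos_INR N.
have n1 : 1 <= INR n by lra.
have n0 : 0 < INR n by lra.
have hl : 0 <= ln (INR n + 1) by rewrite -ln_1; apply: ln_le; lra.
split; first by apply: Rmult_le_pos => //; apply: Rlt_le; apply: Rinv_0_lt_compat.
have H1 : ln (INR n + 1) <= (INR n + 1) / k - 1 + ln k.
  have := ln_le_sub1 (ltac:(apply: Rdiv_lt_0_compat; lra) : 0 < (INR n + 1) / k).
  rewrite /Rdiv ln_mult; [|lra|by apply: Rinv_0_lt_compat].
  rewrite ln_Rinv //; lra.
apply: (Rmult_lt_reg_r (INR n)) => //.
rewrite /Rdiv Rmult_assoc Rinv_l; last lra.
rewrite Rmult_1_r.
have : (INR n + 1) / k <= 2 * INR n / k.
  rewrite /Rdiv; apply: Rmult_le_compat_r; [left; apply: Rinv_0_lt_compat => // | lra].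
have -> : 2 * INR n / k = e / 2 * INR n by rewrite /k; field; lra.
have : Rabs (ln k) + 1 < e / 2 * INR n.
  apply: (Rlt_le_trans _ (INR N * (e / 2))) => //.
  rewrite Rmult_comm; apply: Rmult_le_compat_l; lra.
have := Rle_abs (ln k).
lra.
Qed.

Lemma cv_ln_div (u : nat -> nat) : (forall k, (k <= u k)%N) ->
  Un_cv (fun k => ln (INR (u k) + 1) / INR (u k)) 0.
Proof.
move=> Hu e e0; case: (ln_div_small e0) => N HN; exists N; move=> n Hn.
rewrite /R_dist Rminus_0_r Rabs_pos_eq; first apply: (proj2 (HN _ _)).
  by apply: leq_trans (Hu n); apply/leP.
by apply: (proj1 (HN _ _)); apply: leq_trans (Hu n); apply/leP.
Qed.

Lemma cv_inv : Un_cv (fun n => / INR n) 0.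
Proof.
move=> e e0; have [N HN] := INR_archimed e 1 e0.
exists N.+1; move=> n Hn.
have nN : INR N.+1 <= INR n by apply: INR_leq; apply/leP.
rewrite S_INR in nN; have N0 := pos_INR N.
rewrite /R_dist Rminus_0_r Rabs_pos_eq; last by left; apply: Rinv_0_lt_compat; lra.
apply: (Rmult_lt_reg_r (INR n)); first lra.
rewrite Rinv_l; last lra.
apply: (Rlt_le_trans _ (INR N * e)) => //.
rewrite Rmult_comm; apply: Rmult_le_compat_l; lra.
Qed.

Lemma ln_cont_seq (u : nat -> R) l : 0 < l -> Un_cv u l -> Un_cv (fun n => ln (u n)) (ln l).
Proof.
move=> l0 Hu; apply: (continuity_seq ln) => //.
apply: derivable_continuous_pt.
exact: (exist _ _ (derivable_pt_lim_ln l l0)).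
Qed.

Lemma hn_cont_seq (u : nat -> R) l : 0 < l < 1 -> Un_cv u l -> Un_cv (fun n => hn (u n)) (hn l).
Proof.
move=> Hl Hu; rewrite /hn.
have H1 : Un_cv (fun n => 1 - u n) (1 - l) by apply: CV_minus => //; apply: cv_const.
apply: CV_minus.
  have := CV_mult _ _ _ _ (CV_opp _ _ Hu) (ln_cont_seq (proj1 Hl) Hu).
  by rewrite /opp_seq.
apply: CV_mult => //; apply: ln_cont_seq => //; lra.
Qed.

Definition flo (r : R) : nat := Z.to_nat (Int_part r).

Lemma flo_spec r : 0 <= r -> INR (flo r) <= r < INR (flo r) + 1.
Proof.
move=> r0; have [h1 h2] := base_Int_part r.
have z0 : (0 <= Int_part r)%Z.
  have : (-1 < Int_part r)%Z by apply: lt_IZR; lra.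
  lia.
rewrite /flo INR_IZR_INZ Z2Nat.id //; lra.
Qed.

Definition Dx (x : R) : R := (ln x - ln (1 - x)) / ln 2.
Definition Kx (x : R) : R := - ln (1 - x) / ln 2.

Lemma ln2_pos : 0 < ln 2.
Proof. have := ln_lt_2; lra. Qed.

Lemma Dx_bounds x : 1/2 <= x <= 2/3 -> 0 <= Dx x <= 1.
Proof.
move=> Hx; have l2 := ln2_pos.
have h1 : ln (1 - x) <= ln x by apply: ln_le; lra.
have h2 : ln x <= ln 2 + ln (1 - x).
  rewrite -ln_mult; try lra; apply: ln_le; lra.
rewrite /Dx; split.
- apply: Rmult_le_pos; [lra | left; apply: Rinv_0_lt_compat; lra].
- apply: (Rmult_le_reg_r (ln 2)) => //.
  rewrite /Rdiv Rmult_assoc Rinv_l; lra.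
Qed.

Lemma INR_pos_nat m : (0 < m)%N -> 0 < INR m.
Proof. by move=> H; apply: lt_0_INR; apply/ltP. Qed.

Lemma conv_vec x n m1 m2 : 1/2 <= x <= 2/3 -> feasible_vec G1 G2 n m1 m2 ->
  Dx x * ln (INR m1) + ln (INR m2) <= ln (INR n + 1) - INR n * ln (1 - x).
Proof.
move=> Hx HF.
have [m10 [m20 _]] := HF.
have [w [wn [H1 H2]]] := conv_comb HF.
have l2 := ln2_pos.
have [D0 D1] := Dx_bounds Hx.
set D := Dx x in D0 D1 *.
have E : D * ln 2 = ln x - ln (1 - x) by rewrite /D /Dx; field; lra.
have Cp := C_pos wn.
have n1 : 0 < INR n + 1 by have := pos_INR n; lra.
have p1 := INR_pos_nat m10; have p2 := INR_pos_nat m20.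
have A : ln (INR m1) + ln (INR m2) <= ln (INR n + 1) + ln (INR 'C(n, w)) + INR (n - w)%N * ln 2.
  rewrite -ln_mult // -ln_mult // -ln_pow; last lra.
  rewrite -ln_mult; first last.
  - by apply: pow_lt; lra.
  - by apply: Rmult_lt_0_compat.
  apply: ln_le; first by apply: Rmult_lt_0_compat.
  have I2 : INR 2 = 2 by simpl; ring.
  by have := INR_leq H1; rewrite !INR_muln INR_expn -S_INR I2 -Rmult_assoc.
have B : ln (INR m2) <= ln (INR n + 1) + ln (INR 'C(n, w)).
  rewrite -ln_mult //; apply: ln_le => //.
  have := INR_leq H2; rewrite !INR_muln -S_INR; lra.
have U := lnC_upper (ltac:(lra) : 0 < x < 1) wn.
have N : INR w + INR (n - w)%N = INR n by rewrite -INR_addn subnKC.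
have A' := Rmult_le_compat_l _ _ _ D0 A.
have B' := Rmult_le_compat_l _ _ _ (ltac:(lra) : 0 <= 1 - D) B.
have E' : INR (n - w)%N * (D * ln 2) = INR (n - w)%N * (ln x - ln (1 - x)) by rewrite E.
nra.
Qed.

Lemma len_ge (len : nat -> nat) : (forall k, (len k < len k.+1)%N) -> forall k, (k <= len k)%N.
Proof. move=> H; elim=> // k IH; exact: leq_ltn_trans IH (H k). Qed.

Lemma cv_shift (a : nat -> R) l : Un_cv a l -> Un_cv (fun k => a k.+1) l.
Proof.
move=> H e e0; case: (H e e0) => N HN; exists N; move=> n Hn; apply: HN; lia.
Qed.

Lemma cv_scal (a : nat -> R) l c : Un_cv a l -> Un_cv (fun k => c * a k) (c * l).
Proof. move=> H; apply: CV_mult => //; exact: cv_const. Qed.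

Lemma conv_rate x R1 R2 : 1/2 <= x <= 2/3 -> feasible_rate G1 G2 R1 R2 ->
  Dx x * R1 + R2 <= Kx x.
Proof.
move=> Hx [len [m1 [m2 [HF [Hinc [C1 C2]]]]]].
have Hge := len_ge Hinc.
have l2 := ln2_pos.
pose a k := Dx x * (log2 (INR (m1 k.+1)) / INR (len k.+1)) + log2 (INR (m2 k.+1)) / INR (len k.+1).
pose b k := (ln (INR (len k.+1) + 1) / INR (len k.+1)) * / ln 2 + Kx x.
apply: (@Rle_cv_lim a b).
- move=> k; rewrite /a /b.
  have n0 : 0 < INR (len k.+1) by apply: INR_pos_nat; apply: leq_trans (Hge k.+1).
  have := conv_vec Hx (HF k.+1).
  set n := INR (len k.+1) in n0 * => H.
  have -> : Dx x * (log2 (INR (m1 k.+1)) / n) + log2 (INR (m2 k.+1)) / n =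
    (Dx x * ln (INR (m1 k.+1)) + ln (INR (m2 k.+1))) * / (n * ln 2).
    by rewrite /log2; field; split; lra.
  have -> : ln (n + 1) / n * / ln 2 + Kx x = (ln (n + 1) - n * ln (1 - x)) * / (n * ln 2).
    by rewrite /Kx; field; split; lra.
  apply: Rmult_le_compat_r => //; left; apply: Rinv_0_lt_compat; nra.
- apply: CV_plus.
    apply: cv_scal; exact: (cv_shift C1).
  exact: (cv_shift C2).
- have -> : Kx x = 0 * / ln 2 + Kx x by ring.
  apply: CV_plus; last exact: cv_const.
  apply: CV_mult; last exact: cv_const.
  apply: (cv_ln_div (u := fun k => len k.+1)) => k.
  exact: leq_trans (leqnSn k) (Hge k.+1).
Qed.

Definition Ach (r1 r2 : R) : Prop :=
  exists M1 M2 : nat -> nat, (forall n, feasible_vec G1 G2 n (M1 n) (M2 n)) /\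
    Un_cv (fun n => log2 (INR (M1 n)) / INR n) r1 /\
    Un_cv (fun n => log2 (INR (M2 n)) / INR n) r2.

Lemma Ach_feasible r1 r2 : Ach r1 r2 -> feasible_rate G1 G2 r1 r2.
Proof.
case=> M1 [M2 [HF [H1 H2]]].
by exists id, M1, M2; split => //; split.
Qed.

Lemma Ach_sym r1 r2 : Ach r1 r2 -> Ach r2 r1.
Proof.
case=> M1 [M2 [HF [H1 H2]]]; exists M2, M1; split => //.
by move=> n; apply: feasible_sym.
Qed.

Lemma feasible_rate_sym r1 r2 : feasible_rate G1 G2 r1 r2 -> feasible_rate G1 G2 r2 r1.
Proof.
case=> len [m1 [m2 [HF [Hi [H1 H2]]]]]; exists len, m2, m1; split.
  by move=> k; apply: feasible_sym.
by split.
Qed.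

Lemma cv_abs (a : nat -> R) l : Un_cv a l -> Un_cv (fun n => Rabs (a n - l)) 0.
Proof.
move=> H e e0; case: (H e e0) => N HN; exists N; move=> n Hn.
by rewrite /R_dist Rminus_0_r Rabs_Rabsolu; apply: HN.
Qed.

Lemma log2_pow2 e : log2 (INR (2 ^ e)%N) = INR e.
Proof.
have l2 := ln2_pos.
rewrite /log2 INR_expn ln_pow; last by simpl; lra.
have -> : INR 2 = 2 by simpl; ring.
by field; lra.
Qed.

Lemma trunc_log_bound n : (0 < n)%N -> INR (trunc_log 2 n) <= ln (INR n + 1) / ln 2.
Proof.
move=> n0; have l2 := ln2_pos.
have H := trunc_logP (isT : (1 < 2)%N) n0.
apply: (Rmult_le_reg_r (ln 2)) => //.
rewrite /Rdiv Rmult_assoc Rinv_l; last lra.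
rewrite Rmult_1_r.
have I2 : INR 2 = 2 by simpl; ring.
rewrite -[X in X * ln 2]Rmult_1_r -I2.
have := INR_leq H; rewrite INR_expn => H'.
rewrite Rmult_1_r -ln_pow; last by rewrite I2; lra.
apply: ln_le; first by apply: pow_lt; rewrite I2; lra.
lra.
Qed.

Lemma INR_subn m n : (n <= m)%N -> INR (m - n)%N = INR m - INR n.
Proof. by move=> H; rewrite -minusE minus_INR //; apply/leP. Qed.

Lemma Ach_main beta : 0 < beta < 1 -> Ach (1 - beta) (hn beta / ln 2).
Proof.
move=> Hb; have l2 := ln2_pos.
pose b n := flo (beta * INR n).
have bspec n : INR (b n) <= beta * INR n < INR (b n) + 1.
  apply: flo_spec; apply: Rmult_le_pos; [lra | exact: pos_INR].
have bn n : (b n <= n)%N.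
  apply/leP; apply: INR_le; have := bspec n; have := pos_INR n; nra.
pose t n := (trunc_log 2 n + 2)%N.
pose e n := (n - b n - t n)%N.
exists (fun n => 2 ^ e n)%N, (fun n => 'C(n, b n)); split.
  move=> n; case: (leqP (t n) (n - b n)) => Ht.
    apply: (@construct n (b n) (e n) (t n) (bn n)); first by rewrite /e subnK.
    have := trunc_log_ltn n (isT : (1 < 2)%N).
    rewrite /t addn2 !expnS; lia.
  have -> : e n = 0%N by rewrite /e; lia.
  exact: construct_triv.
split.
-
  apply: (@squeeze _ (fun n => 2 * / INR n + ln (INR n + 1) / INR n * / ln 2) _ 1%N).
    move=> n n1; rewrite log2_pow2.
    have n0 : 0 < INR n by apply: INR_pos_nat.
    have [hb1 hb2] := bspec n.
    have Hup : INR (e n) <= INR n - INR (b n).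
      rewrite -INR_subn //; apply: INR_leq; rewrite /e leq_subr //.
    have Hlo : INR n - INR (b n) - INR (t n) <= INR (e n).
      case: (leqP (t n) (n - b n)) => Ht.
        by rewrite /e !INR_subn //; lra.
      have -> : e n = 0%N by rewrite /e; lia.
      have := INR_leq (ltnW Ht); rewrite INR_subn //; simpl; lra.
    have Ht : INR (t n) <= 2 + ln (INR n + 1) / ln 2.
      rewrite /t INR_addn; have := trunc_log_bound n1; simpl; lra.
    have Hl : 0 <= ln (INR n + 1) by rewrite -ln_1; apply: ln_le; lra.
    have -> : INR (e n) / INR n - (1 - beta) = (INR (e n) - (1 - beta) * INR n) * / INR n.
      by field; lra.
    have -> : 2 * / INR n + ln (INR n + 1) / INR n * / ln 2 =
      (2 + ln (INR n + 1) / ln 2) * / INR n by field; lra.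
    rewrite Rabs_mult (Rabs_pos_eq (/ INR n)); last by left; apply: Rinv_0_lt_compat.
    apply: Rmult_le_compat_r; first by left; apply: Rinv_0_lt_compat.
    have hpos : 0 <= ln (INR n + 1) / ln 2.
      by apply: Rmult_le_pos => //; left; apply: Rinv_0_lt_compat.
    apply: Rabs_le; split; lra.
  have -> : 0 = 2 * 0 + 0 * / ln 2 by ring.
  apply: CV_plus; first exact: cv_scal cv_inv.
  apply: CV_mult; last exact: cv_const.
  exact: (cv_ln_div (u := id)).
-
  pose p n := INR (b n) / INR n.
  have Hp : Un_cv p beta.
    apply: (@squeeze _ (fun n => / INR n) _ 1%N); last exact: cv_inv.
    move=> n n1; have n0 : 0 < INR n by apply: INR_pos_nat.
    have [hb1 hb2] := bspec n.
    have -> : p n - beta = (INR (b n) - beta * INR n) * / INR n by rewrite /p; field; lra.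
    rewrite Rabs_mult (Rabs_pos_eq (/ INR n)); last by left; apply: Rinv_0_lt_compat.
    rewrite -[X in _ <= X]Rmult_1_l.
    apply: Rmult_le_compat_r; first by left; apply: Rinv_0_lt_compat.
    apply: Rabs_le; split; lra.
  have Hh := hn_cont_seq Hb Hp.
  have [N HN] := INR_archimed beta 1 (proj1 Hb).
  apply: (@squeeze _ (fun n => Rabs (hn (p n) - hn beta) * / ln 2 + ln (INR n + 1) / INR n * / ln 2) _ (maxn N 1)).
    move=> n Hn.
    have n1 : (1 <= n)%N by apply: leq_trans (leq_maxr N 1) Hn.
    have nN : (N <= n)%N by apply: leq_trans (leq_maxl N 1) Hn.
    have n0 : 0 < INR n by apply: INR_pos_nat.
    have [hb1 hb2] := bspec n.
    have NR := INR_leq nN.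
    have b0 : (0 < b n)%N.
      apply/ltP; apply: INR_lt; simpl.
      have : 1 < INR n * beta by apply: (Rlt_le_trans _ (INR N * beta)) => //; apply: Rmult_le_compat_r; lra.
      lra.
    have bn' : (b n < n)%N.
      apply/ltP; apply: INR_lt; nra.
    have [L1 L2] := lnC_bounds b0 bn'.
    rewrite -/(p n) in L1 L2.
    have Hl : 0 <= ln (INR n + 1) by rewrite -ln_1; apply: ln_le; lra.
    have -> : log2 (INR 'C(n, b n)) / INR n - hn beta / ln 2 =
      ((ln (INR 'C(n, b n)) - INR n * hn (p n)) * / INR n + (hn (p n) - hn beta)) * / ln 2.
      by rewrite /log2; field; split; lra.
    rewrite Rabs_mult (Rabs_pos_eq (/ ln 2)); last by left; apply: Rinv_0_lt_compat.
    rewrite -Rmult_plus_distr_r; apply: Rmult_le_compat_r; first by left; apply: Rinv_0_lt_compat.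
    apply: (Rle_trans _ _ _ (Rabs_triang _ _)); rewrite Rplus_comm.
    apply: Rplus_le_compat_l.
    rewrite Rabs_mult (Rabs_pos_eq (/ INR n)); last by left; apply: Rinv_0_lt_compat.
    rewrite /Rdiv; apply: Rmult_le_compat_r; first by left; apply: Rinv_0_lt_compat.
    apply: Rabs_le; split; lra.
  have -> : 0 = 0 * / ln 2 + 0 * / ln 2 by ring.
  apply: CV_plus; apply: CV_mult; try exact: cv_const.
    exact: cv_abs.
  exact: (cv_ln_div (u := id)).
Qed.

Lemma cv_ev (a b : nat -> R) l N : (forall n, (N <= n)%N -> a n = b n) -> Un_cv a l -> Un_cv b l.
Proof.
move=> E H e e0; case: (H e e0) => M HM; exists (maxn M N); move=> n Hn.
have Hn' : (maxn M N <= n)%N by apply/leP.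
rewrite -E; first by apply: HM; apply/leP; apply: leq_trans (leq_maxl _ _) Hn'.
exact: leq_trans (leq_maxr _ _) Hn'.
Qed.

Lemma cv_comp (h : nat -> R) l (w : nat -> nat) : Un_cv h l ->
  (forall K, exists N, forall n, (N <= n)%N -> (K <= w n)%N) -> Un_cv (fun n => h (w n)) l.
Proof.
move=> H Hw e e0; case: (H e e0) => K HK; case: (Hw K) => N HN; exists N; move=> n Hn.
by apply: HK; apply/leP; apply: HN; apply/leP.
Qed.

Lemma rate_prod (f g : nat -> nat) (u v : nat -> nat) r r' lam :
  (forall n, (0 < f n)%N) -> (forall n, (0 < g n)%N) ->
  Un_cv (fun n => log2 (INR (f n)) / INR n) r -> Un_cv (fun n => log2 (INR (g n)) / INR n) r' ->
  Un_cv (fun n => INR (u n) / INR n) lam -> Un_cv (fun n => INR (v n) / INR n) (1 - lam) ->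
  (forall K, exists N, forall n, (N <= n)%N -> (K <= u n)%N) ->
  (forall K, exists N, forall n, (N <= n)%N -> (K <= v n)%N) ->
  Un_cv (fun n => log2 (INR (f (u n) * g (v n))%N) / INR n) (lam * r + (1 - lam) * r').
Proof.
move=> f0 g0 Hf Hg Hu Hv Du Dv.
have [N1 HN1] := Du 1%N; have [N2 HN2] := Dv 1%N.
apply: (@cv_ev (fun n => INR (u n) / INR n * (log2 (INR (f (u n))) / INR (u n)) +
                        INR (v n) / INR n * (log2 (INR (g (v n))) / INR (v n))) _ _ (maxn (maxn N1 N2) 1)).
  move=> n Hn.
  have h1 : (1 <= u n)%N by apply: HN1; apply: leq_trans Hn; rewrite leq_max leq_max leqnn.
  have h2 : (1 <= v n)%N.
    apply: HN2; apply: leq_trans Hn; rewrite leq_max leq_max leqnn orbT //.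
  have h3 : (1 <= n)%N by apply: leq_trans Hn; rewrite leq_max leqnn orbT.
  have p1 := INR_pos_nat h1; have p2 := INR_pos_nat h2; have p3 := INR_pos_nat h3.
  have q1 := INR_pos_nat (f0 (u n)); have q2 := INR_pos_nat (g0 (v n)).
  rewrite INR_muln /log2 ln_mult //.
  have l2 := ln2_pos; field; repeat split; lra.
apply: CV_plus.
- apply: CV_mult; first exact: Hu.
  exact: (cv_comp Hf Du).
- apply: CV_mult; first exact: Hv.
  exact: (cv_comp Hg Dv).
Qed.

Lemma Ach_ts a1 a2 c1 c2 lam : Ach a1 a2 -> Ach c1 c2 -> 0 < lam < 1 ->
  Ach (lam * a1 + (1 - lam) * c1) (lam * a2 + (1 - lam) * c2).
Proof.
case=> M1 [M2 [HF [H1 H2]]]; case=> N1 [N2 [HG [K1 K2]]] Hl.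
pose u n := flo (lam * INR n).
have uspec n : INR (u n) <= lam * INR n < INR (u n) + 1.
  apply: flo_spec; apply: Rmult_le_pos; [lra | exact: pos_INR].
have un n : (u n <= n)%N.
  apply/leP; apply: INR_le; have := uspec n; have := pos_INR n; nra.
pose v n := (n - u n)%N.
have vR n : INR (v n) = INR n - INR (u n) by rewrite /v INR_subn.
have Hu : Un_cv (fun n => INR (u n) / INR n) lam.
  apply: (@squeeze _ (fun n => / INR n) _ 1%N); last exact: cv_inv.
  move=> n n1; have n0 : 0 < INR n by apply: INR_pos_nat.
  have [hb1 hb2] := uspec n.
  have -> : INR (u n) / INR n - lam = (INR (u n) - lam * INR n) * / INR n by field; lra.
  rewrite Rabs_mult (Rabs_pos_eq (/ INR n)); last by left; apply: Rinv_0_lt_compat.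
  rewrite -[X in _ <= X]Rmult_1_l.
  apply: Rmult_le_compat_r; first by left; apply: Rinv_0_lt_compat.
  apply: Rabs_le; split; lra.
have Hv : Un_cv (fun n => INR (v n) / INR n) (1 - lam).
  apply: (@cv_ev (fun n => 1 - INR (u n) / INR n) _ _ 1%N).
    move=> n n1; have n0 : 0 < INR n by apply: INR_pos_nat.
    rewrite vR; field; lra.
  apply: CV_minus => //; exact: cv_const.
have Du K : exists N, forall n, (N <= n)%N -> (K <= u n)%N.
  have [N HN] := INR_archimed lam (INR K + 1) (proj1 Hl).
  exists N => n Hn; apply/leP; apply: INR_le.
  have := INR_leq Hn; have := uspec n; have := pos_INR N; nra.
have Dv K : exists N, forall n, (N <= n)%N -> (K <= v n)%N.
  have [N HN] := INR_archimed (1 - lam) (INR K) (ltac:(lra)).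
  exists N => n Hn; apply/leP; apply: INR_le; rewrite vR.
  have := INR_leq Hn; have := uspec n; have := pos_INR N; nra.
have f0 n : (0 < M1 n)%N by case: (HF n).
have f0' n : (0 < M2 n)%N by case: (HF n) => _ [].
have g0 n : (0 < N1 n)%N by case: (HG n).
have g0' n : (0 < N2 n)%N by case: (HG n) => _ [].
exists (fun n => M1 (u n) * N1 (v n))%N, (fun n => M2 (u n) * N2 (v n))%N; split.
  move=> n; have := feasible_prod (HF (u n)) (HG (v n)).
  by rewrite /v subnKC.
split; exact: rate_prod.
Qed.

Lemma Hb_hn x : Hb x = hn x / ln 2.
Proof. have l2 := ln2_pos; rewrite /Hb /hn /log2; field; lra. Qed.

Lemma hn_sym x : hn (1 - x) = hn x.
Proof. rewrite /hn; have -> : 1 - (1 - x) = x by ring. ring. Qed.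

Lemma Kx_id x : Kx x = Dx x * x + Hb x.
Proof. have l2 := ln2_pos; rewrite /Kx /Dx Hb_hn /hn; field; lra. Qed.

Lemma ln_half : ln (1/2) = - ln 2.
Proof. rewrite /Rdiv Rmult_1_l ln_Rinv //; lra. Qed.

Lemma Hb_half : Hb (1/2) = 1.
Proof.
have l2 := ln2_pos; rewrite Hb_hn /hn.
have -> : 1 - 1/2 = 1/2 by field.
rewrite ln_half; field; lra.
Qed.

Lemma Hb_le1 y : 0 < y < 1 -> Hb y <= 1.
Proof.
move=> Hy; have l2 := ln2_pos; rewrite Hb_hn.
apply: (Rmult_le_reg_r (ln 2)) => //.
rewrite /Rdiv Rmult_assoc Rinv_l; last lra.
rewrite Rmult_1_r Rmult_1_l /hn.
have a := ln_le_sub1 (ltac:(apply: Rinv_0_lt_compat; lra) : 0 < / (2 * y)).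
have b := ln_le_sub1 (ltac:(apply: Rinv_0_lt_compat; lra) : 0 < / (2 * (1 - y))).
rewrite !ln_Rinv in a b; try lra.
rewrite !ln_mult in a b; try lra.
have e1 : y * / (2 * y) = 1/2 by field; lra.
have e2 : (1 - y) * / (2 * (1 - y)) = 1/2 by field; lra.
have a' := Rmult_le_compat_l y _ _ (ltac:(lra)) a.
have b' := Rmult_le_compat_l (1 - y) _ _ (ltac:(lra)) b.
nra.
Qed.

Lemma Dx_pos x : 1/2 < x < 1 -> 0 < Dx x.
Proof.
move=> Hx; have l2 := ln2_pos; rewrite /Dx.
have : ln (1 - x) < ln x by apply: ln_increasing; lra.
move=> H; apply: Rdiv_lt_0_compat; lra.
Qed.

Lemma ln_third : ln (1 - 2/3) = - ln 3.
Proof. have -> : 1 - 2/3 = / 3 by field. rewrite ln_Rinv //; lra. Qed.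

Lemma ln_twothird : ln (2/3) = ln 2 - ln 3.
Proof. rewrite /Rdiv ln_mult; try lra; rewrite ln_Rinv //; lra. Qed.

Lemma Hb_23 : Hb (2/3) = log2 3 - 2/3.
Proof.
have l2 := ln2_pos; rewrite Hb_hn /hn ln_third ln_twothird /log2; field; lra.
Qed.

Lemma Dx_23 : Dx (2/3) = 1.
Proof. have l2 := ln2_pos; rewrite /Dx ln_third ln_twothird; field; lra. Qed.

Lemma Kx_23 : Kx (2/3) = log2 3.
Proof. have l2 := ln2_pos; rewrite /Kx ln_third /log2; field; lra. Qed.

Lemma log3_gt : 4/3 < log2 3.
Proof.
have l2 := ln2_pos; rewrite /log2.
have H : ln (2 ^ 4) < ln (3 ^ 3) by apply: ln_increasing; simpl; lra.
rewrite !ln_pow in H; try lra.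
simpl in H.
apply: (Rmult_lt_reg_r (ln 2)) => //.
have -> : ln 3 / ln 2 * ln 2 = ln 3 by field; lra.
lra.
Qed.

Lemma optimal_sym r1 r2 : optimal_rate G1 G2 r1 r2 -> optimal_rate G1 G2 r2 r1.
Proof.
case=> F [P1 P2]; split; first exact: feasible_rate_sym.
split.
- move=> r Hr Hf; apply: (P2 r Hr); exact: feasible_rate_sym.
- move=> r Hr Hf; apply: (P1 r Hr); exact: feasible_rate_sym.
Qed.

Lemma case1 x : 1/2 <= x <= 2/3 -> optimal_rate G1 G2 x (Hb x).
Proof.
move=> Hx; split.
  have Hb' : 0 < 1 - x < 1 by lra.
  have A := Ach_main Hb'.
  have E : 1 - (1 - x) = x by ring.
  rewrite hn_sym -Hb_hn E in A.
  exact: Ach_feasible A.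
split.
- move=> r Hr Hf.
  case: (Req_dec x (1/2)) => [ex|nex].
  + pose x' := Rmin ((x + r) / 2) (2/3).
    have hx' : 1/2 < x' <= 2/3.
      rewrite /x'; split; [apply: Rmin_glb_lt; lra | apply: Rmin_r].
    have hx'r : x' < r.
      rewrite /x'; apply: (Rle_lt_trans _ ((x + r) / 2)); [apply: Rmin_l | lra].
    have C := conv_rate (ltac:(lra) : 1/2 <= x' <= 2/3) Hf.
    rewrite Kx_id in C.
    have D := Dx_pos (ltac:(lra) : 1/2 < x' < 1).
    rewrite ex Hb_half in C.
    have := Hb_le1 (ltac:(lra) : 0 < x' < 1).
    nra.
  + have C := conv_rate Hx Hf.
    rewrite Kx_id in C.
    have D := Dx_pos (ltac:(lra) : 1/2 < x < 1).
    nra.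
- move=> r Hr Hf.
  have C := conv_rate Hx Hf.
  rewrite Kx_id in C; lra.
Qed.

Lemma case2 R1 : 2/3 <= R1 <= log2 3 - 2/3 -> optimal_rate G1 G2 R1 (log2 3 - R1).
Proof.
move=> HR; have l3 := log3_gt.
set h := log2 3 - 2/3 in HR.
have A0 : Ach (2/3) h.
  have Hb' : 0 < 1 - 2/3 < 1 by lra.
  have A := Ach_main Hb'.
  have E : 1 - (1 - 2/3) = 2/3 by ring.
  by rewrite hn_sym -Hb_hn E Hb_23 in A.
have A1 := Ach_sym A0.
have C23 : 1/2 <= 2/3 <= 2/3 by lra.
split.
  apply: Ach_feasible.
  case: (Req_dec R1 (2/3)) => [->|n1]; first by [].
  case: (Req_dec R1 h) => [->|n2].
    by have -> : log2 3 - h = 2/3 by rewrite /h; ring.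
  have Hl : 0 < (h - R1) / (h - 2/3) < 1.
    split; first by apply: Rdiv_lt_0_compat; lra.
    apply: (Rmult_lt_reg_r (h - 2/3)); first lra.
    have -> : (h - R1) / (h - 2/3) * (h - 2/3) = h - R1 by field; lra.
    lra.
  have := Ach_ts A0 A1 Hl.
  have -> : (h - R1) / (h - 2/3) * (2/3) + (1 - (h - R1) / (h - 2/3)) * h = R1.
    by field; lra.
  have -> : (h - R1) / (h - 2/3) * h + (1 - (h - R1) / (h - 2/3)) * (2/3) = log2 3 - R1.
    by rewrite /h; field; rewrite -/h; lra.
  by [].
split.
- move=> r Hr Hf; have := conv_rate C23 Hf; rewrite Dx_23 Kx_23; lra.
- move=> r Hr Hf; have := conv_rate C23 Hf; rewrite Dx_23 Kx_23; lra.
Qed.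

Theorem proposition16 :
  (forall R1 : R, 1/2 <= R1 <= 2/3 -> optimal_rate G1 G2 R1 (Hb R1)) /\
  (forall R1 : R, 2/3 <= R1 <= log2 3 - 2/3 -> optimal_rate G1 G2 R1 (log2 3 - R1)) /\
  (forall R2 : R, 1/2 <= R2 <= 2/3 -> optimal_rate G1 G2 (Hb R2) R2).
Proof.
split; first exact: case1.
split; first exact: case2.
by move=> R2 H; apply: optimal_sym; apply: case1.
Qed.
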